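(* For $r\in\{1,2\}$, $\mathcal{C}_r$ is a separable overpartition class with basis $\mathcal{G}_r=\bigcup_{m\ge1}\mathcal{G}_r(m)$. That is: - each $\mathcal{G}_r(m)$ is finite; - every overpartition in $\mathcal{C}_r$ with exactly $m\ge1$ parts can be written uniquely as $(b_1+\pi_1,\dots,b_m+\pi_m)$ with $(b_1,\dots,b_m)\in\mathcal{G}_r(m)$ and $\pi_1\ge\dots\ge\pi_m\ge0$ integers; - every such expression lies in $\mathcal{C}_r$. Consequently \[\sum_{\pi\in\mathcal{C}_r}q^{|\pi|}=1+\sum_{m\ge1}\frac{1}{(q;q)_m}\sum_{\pi\in\mathcal{G}_r(m)}q^{|\pi|}.\]
   Context: An overpartition is a partition in which the first occurrence of each part size may be overlined. Its parts are listed in non-increasing order with respect to $1<\bar1<2<\bar2<\cdots$. A part is of size $t$ if it is $t$ or $\bar t$. For an integer $b\ge0$, adding $b$ to a part of size $t$ gives the part of size $t+b$ with the same overline status. For $r\in\{1,2\}$, $\mathcal{C}_r$ is the set of overpartitions $(\pi_1,\dots,\pi_\ell)$ such that: - for each $1\le i<\ell$, the size of $\pi_i$ minus the size of $\pi_{i+1}$ is at least $1$, and at least $2$ if $\pi_i$ is non-overlined; - at most $r-1$ parts equal the non-overlined part $1$. For $m\ge1$, $\mathcal{G}(m)$ is the set of overpartitions $(\pi_1,\dots,\pi_m)$ such that for every $1\le i<m$, if $\pi_{i+1}$ has size $t$ then $\pi_i\in\{\overline{t+1},\,t+2\}$. Further: - $\mathcal{G}_2(m)$ is the subset of $\mathcal{G}(m)$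 with smallest part $\pi_m\in\{1,\bar1\}$; - $\mathcal{G}_1(m)$ is the subset with $\pi_m\in\{\bar1,2\}$. $(a;q)_n=\prod_{i=0}^{n-1}(1-aq^i)$. *)

(* Defs.v *)
From HB Require Import structures.
From mathcomp Require Import all_boot all_order all_algebra.
From mathcomp Require Import all_classical all_reals all_analysis.
Set Implicit Arguments. Unset Strict Implicit. Unset Printing Implicit Defensive.
Import Order.TTheory GRing.Theory Num.Theory.

(* A part is a pair (t, o): t = size, o = true iff overlined. *)
Definition part := (nat * bool)%type.
Definition overpartition := seq part.

(* Key for the order 1 < 1bar < 2 < 2bar < ... *)
Definition part_key (p : part) : nat := (2 * p.1 + p.2)%N.

(* p may be immediately followed by p' in an overpartition:
   non-increasing order, and equal parts only if non-overlined
   (only the first occurrence of a size may be overlined). *)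
Definition op_step (p p' : part) : bool :=
  (part_key p' < part_key p)%N || ((p == p') && ~~ p.2).

Definition is_overpartition (s : overpartition) : bool :=
  all (fun p => (0 < p.1)%N) s && sorted op_step s.

Definition weight (s : overpartition) : nat := sumn (map fst s).

Definition C_step (p p' : part) : bool :=
  (p'.1 + (if p.2 then 1 else 2) <= p.1)%N.

Definition C_class (r : nat) (s : overpartition) : bool :=
  [&& is_overpartition s, sorted C_step s & (count (pred1 (1%N, false)) s <= r.-1)%N].

Definition G_step (p p' : part) : bool :=
  (p == (p'.1.+1, true)) || (p == (p'.1.+2, false)).

Definition G_set (m : nat) (s : overpartition) : bool :=
  [&& size s == m, is_overpartition s & sorted G_step s].

Definition G_r (r m : nat) (s : overpartition) : bool :=
  G_set m s &&
  (last (0%N, false) s \in (if r == 1%N then [:: (1%N, true); (2%N, false)]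
                                         else [:: (1%N, false); (1%N, true)])).

Definition opshift (b : overpartition) (p : seq nat) : overpartition :=
  [seq ((x.1.1 + x.2)%N, x.1.2) | x <- zip b p].

Definition qpoch {R : comRingType} (a q : R) (n : nat) : R :=
  (\prod_(i < n) (1 - a * q ^+ i))%R.

(* Main.v *)
Require Import Defs.
From HB Require Import structures.
From mathcomp Require Import all_boot all_order all_algebra.
From mathcomp Require Import all_classical all_reals all_analysis.
From mathcomp Require Import zify.
Import Order.TTheory GRing.Theory Num.Theory.
Set Implicit Arguments. Unset Strict Implicit. Unset Printing Implicit Defensive.

Section Comb.
Local Open Scope nat_scope.

Definition dd (o : bool) : nat := if o then 1 else 2.
Definition Lr (r : nat) : seq part :=
  if r == 1 then [:: (1, true); (2, false)] else [:: (1, false); (1, true)].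

Definition gok (r : nat) (b : overpartition) : bool :=
  [&& sorted G_step b, b != [::] & last (0, false) b \in Lr r].

Lemma G_stepE c h : G_step c h = (c == (h.1 + dd c.2, c.2)).
Proof.
case: c => t [] /=; rewrite /G_step /dd /= !xpair_eqE ?andbT ?andbF ?orbF ?addn1 ?addn2 //.
Qed.

Lemma opshift_cons c b x p : opshift (c :: b) (x :: p) = (c.1 + x, c.2) :: opshift b p.
Proof. by []. Qed.

Lemma gok_cons r c h b : gok r (c :: h :: b) = G_step c h && gok r (h :: b).
Proof. by rewrite /gok /= andbA. Qed.

Lemma gok_all r b : gok r b ->
  all (fun c => [&& 0 < c.1, c.1 <= 2 * size b & (r == 1) ==> (c != (1, false))]) b.
Proof.
elim: b => [|c b IH] //; case: b IH => [|h b] IH.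
  rewrite /gok /= andbT /Lr; case: (r == 1); rewrite !inE => /orP[] /eqP -> //.
rewrite gok_cons => /andP [Gch Hg]; have := IH Hg.
rewrite /= => /andP [Hh Hb]; move: Gch; rewrite G_stepE => /eqP Ec.
apply/andP; split.
  rewrite Ec /= /dd. move: Hh => /and3P [H1 H2 H3].
  apply/and3P; split.
  - by case: (c.2); rewrite addn_gt0 H1.
  - by case: (c.2); rewrite ?addn1 ?addn2 -?addnS; rewrite !mulnS; lia.
  - apply/implyP => _; apply/negP; rewrite xpair_eqE => /andP [/eqP E _]; move: E; case: (c.2) => /=; lia.
apply/andP; split.
  move: Hh => /and3P [H1 H2 H3]; apply/and3P; split => //; rewrite /=; lia.
apply: (sub_all _ (Hb)) => y /and3P [H1 H2 H3]; apply/and3P; split => //=; lia.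
Qed.

Lemma G_op c h : G_step c h -> op_step c h.
Proof.
rewrite G_stepE => /eqP ->; rewrite /op_step /part_key /dd /=.
by case: h => t o; case: (c.2); case: o => /=; apply/orP; left; lia.
Qed.

Lemma C_op c h : C_step c h -> op_step c h.
Proof.
rewrite /C_step /op_step /part_key => H; apply/orP; left.
by case: c H => t o; case: h => t' o'; case: o; case: o' => /=; lia.
Qed.

Lemma gok_isop r b : gok r b -> is_overpartition b.
Proof.
move=> Hg; rewrite /is_overpartition; apply/andP; split.
  by move: (gok_all Hg); apply: sub_all => c /and3P [].
by case/andP: Hg => Hs _; move: Hs; apply: sub_sorted; exact: G_op.
Qed.

Lemma G_rE r m b : G_r r m b = (size b == m) && gok r b.
Proof.
rewrite /G_r /G_set /gok; apply/idP/idP.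
  move=> /andP [/and3P [-> _ ->] HL]; rewrite /Lr HL andbT /=.
  by case: b HL => //; case: (r == 1).
move=> /andP [Hs Hg]; have := gok_isop Hg; case/and3P: Hg => H1 H2 H3.
by rewrite Hs H1 /= => ->; move: H3; rewrite /Lr.
Qed.

Lemma C_count1 s : sorted C_step s -> count (pred1 (1, false)) s <= 1.
Proof.
elim: s => [|a s IH] //=.
case: s IH => [|b s] IH /=; first by case: (a == _).
move=> /andP [Hab Hs]; have := IH Hs.
case E: (a == (1, false)) => //=.
move/eqP: E Hab => ->; rewrite /C_step /=; lia.
Qed.

Lemma opshift_size b p : size (opshift b p) = minn (size b) (size p).
Proof. by rewrite size_map size_zip. Qed.

Lemma opshift_snd b p : size b = size p -> map snd (opshift b p) = map snd b.
Proof.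
elim: b p => [|c b IH] [|x p] //= [] /IH <-. by [].
Qed.

Lemma opshift_weight b p : size b = size p ->
  weight (opshift b p) = weight b + sumn p.
Proof.
rewrite /weight; elim: b p => [|c b IH] [|x p] //= [] /IH ->; lia.
Qed.

Lemma opshift_inj b p1 p2 : size p1 = size b -> size p2 = size b ->
  opshift b p1 = opshift b p2 -> p1 = p2.
Proof.
elim: b p1 p2 => [|c b IH] [|x1 p1] [|x2 p2] //= [] H1 [] H2 [] E1 E2.
by rewrite (IH _ _ H1 H2 E2); congr (_ :: _); lia.
Qed.

Lemma gok_unique r b1 b2 : (r == 1) || (r == 2) -> gok r b1 -> gok r b2 ->
  size b1 = size b2 -> map snd b1 = map snd b2 -> b1 = b2.
Proof.
move=> Hr; elim: b1 b2 => [|c1 b1 IH] [|c2 b2] //= G1 G2 [] Hs [] Eo Em.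
case: b1 IH G1 Hs Em => [|h1 b1] IH G1 Hs Em.
  case: b2 G2 Hs Em => // G2 _ _; congr (_ :: _).
  move: G1 G2 Eo; rewrite /gok /= /Lr.
  case/orP: Hr => /eqP ->; rewrite /= !inE;
    case: c1 => t1 o1; case: c2 => t2 o2 /=;
    by move=> /orP [] /eqP [-> ->] /orP [] /eqP [-> ->].
case: b2 G2 Hs Em => [|h2 b2] // G2 Hs Em.
move: G1 G2; rewrite !gok_cons => /andP [S1 G1] /andP [S2 G2].
have E := IH _ G1 G2 Hs Em; rewrite -E in S2 *; congr (_ :: _).
move: S1 S2; rewrite !G_stepE Eo => /eqP E1 /eqP E2; case: E => Eh _; by rewrite E1 E2 /= Eh.
Qed.

Lemma decomp_ex r x : (r == 1) || (r == 2) -> C_class r x -> x != [::] ->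
  exists b p, [/\ gok r b, size b = size x, size p = size x,
     sorted [rel i j : nat | j <= i] p & x = opshift b p].
Proof.
move=> Hr; elim: x => [|a x IH] // HC _.
move: HC; rewrite /C_class /is_overpartition /= => /and3P [/andP [/andP [Ha Hall] Hop] HCs Hcnt].
case: x IH Hall Hop HCs Hcnt => [|a' x] IH Hall Hop HCs Hcnt.
  pose lb := if r == 1 then (if a.2 then (1, true) else (2, false)) else (1, a.2).
  exists [:: lb], [:: a.1 - lb.1]; split => //.
  - rewrite /gok /= /Lr /lb; case: (r == 1); case: (a.2) => //=.
  - rewrite /opshift /=; rewrite /lb; clear lb IH Hop HCs Hall; case: a Ha Hcnt => t o /= Ha Hcnt.
    case/orP: Hr Hcnt => /eqP -> Hcnt /=; case: o Hcnt => //= Hcnt; congr [:: (_, _)]; try lia.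
    move: Hcnt; rewrite xpair_eqE andbT; case: (t == 1) /eqP => /=; lia.
have HC' : C_class r (a' :: x).
  rewrite /C_class /is_overpartition Hall /=.
  move: Hop HCs => /= /andP [_ ->] /andP [_ ->] /=.
  move: Hcnt; case: (a == _) => /=; lia.
have [b' [p' [Gb' Sb' Sp' Hp' Ex]]] := IH HC' isT.
case: b' p' Gb' Sb' Sp' Hp' Ex => [|h b'] [|y p'] // Gb' Sb' Sp' Hp' Ex.
move: Ex; rewrite opshift_cons => -[Ea' Ex].
move: HCs => /= /andP [Cs _]; rewrite Ea' /C_step /= in Cs.
exists ((h.1 + dd a.2, a.2) :: h :: b'), ((a.1 - (h.1 + dd a.2)) :: y :: p').
split.
- by rewrite gok_cons Gb' andbT G_stepE.
- by move: Sb' => /= [->].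
- by move: Sp' => /= [->].
- apply/andP; split; last exact: Hp'. rewrite /= /dd; case: (a.2) Cs => /=; lia.
- rewrite !opshift_cons Ea' -Ex /=; congr (_ :: _); case: a Cs {Hcnt Hop Ha IH Hall} => t o /= Cs; rewrite /dd; congr (_, _); case: o Cs => /=; lia.
Qed.

Lemma compose_ok r b p : (r == 1) || (r == 2) -> gok r b -> size p = size b ->
  sorted [rel i j : nat | j <= i] p -> C_class r (opshift b p).
Proof.
move=> Hr Hg Hs Hp.
have HA := gok_all Hg.
have HCs : sorted C_step (opshift b p).
  elim: b p Hg Hs Hp {HA} => [|c b IH] [|x p] //= Hg [] Hs Hp.
  case: b p IH Hg Hs Hp => [|h b] [|y p] //= IH Hg Hs Hp.
  rewrite gok_cons in Hg; case/andP: Hg => Gch Hg.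
  case/andP: Hp => Hxy Hp.
  apply/andP; split; last by apply: (IH (y :: p)).
  move: Gch; rewrite G_stepE /C_step => /eqP -> /=; rewrite /dd.
  by case: (c.2) => /=; lia.
rewrite /C_class /is_overpartition HCs (sub_sorted C_op HCs) andbT /=.
have HA' : all (fun c => (0 < c.1) && ((r == 1) ==> (c != (1, false)))) b.
  by move: HA; apply: sub_all => z /and3P [-> _ ->].
have Hall : all (fun c => (0 < c.1) && ((r == 1) ==> (c != (1, false)))) (opshift b p).
  elim: b p Hs HA' {Hg Hp HCs HA} => [|c b IH] [|x p] //= [] Hs /andP [Hc HA].
  apply/andP; split; last by apply: IH.
  case/andP: Hc => H1 H3; apply/andP; split; first lia.
  apply/implyP => /(implyP H3); apply: contra; case: c H1 H3 {HA} => t [] /= H1 H3; rewrite !xpair_eqE ?andbT ?andbF // => /eqP E; apply/eqP; lia.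
apply/andP; split; first by apply: (sub_all _ (Hall)) => z /andP [].
case/orP: Hr => /eqP Er; last by rewrite Er; apply: C_count1.
rewrite Er /= leqn0; apply/eqP/count_memPn/negP => /(allP Hall) /andP [_].
by rewrite Er eqxx.
Qed.

Fixpoint seqs_over (L : seq part) (n : nat) : seq overpartition :=
  if n is n'.+1 then [seq x :: s | x <- L, s <- seqs_over L n'] else [:: [::]].

Lemma seqs_overP L n s : size s = n -> all (mem L) s -> s \in seqs_over L n.
Proof.
elim: n s => [|n IH] [|c s] //= [] Hs /andP [Hc Hall].
by apply: allpairs_f => //; apply: IH.
Qed.

Lemma G_finite r m : exists l : seq overpartition, forall b, G_r r m b <-> b \in l.
Proof.
pose L := [seq (i, o) | i <- iota 0 (2 * m).+1, o <- [:: true; false]].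
exists [seq b <- seqs_over L m | G_r r m b] => b.
rewrite mem_filter; split; last by case/andP.
move=> H; rewrite H /=; move: H; rewrite G_rE => /andP [/eqP Hs Hg].
apply: seqs_overP => //; apply: (sub_all _ ((gok_all Hg))) => -[i o] /and3P [_ H2 _].
rewrite Hs in H2; rewrite /= /L; apply: allpairs_f; first by rewrite mem_iota /=; move: H2 => /=; lia.
by case: o {H2}.
Qed.

End Comb.

Section Anal.
Local Open Scope classical_set_scope.
Local Open Scope ring_scope.

Lemma esumZl (R : realType) (T : choiceType) (S : set T) (c : R) (f : T -> \bar R) :
  0 <= c -> (forall i, (0 <= f i)%E) ->
  (\esum_(i in S) (c%:E * f i) = c%:E * \esum_(i in S) f i)%E.
Proof.
move=> c0 f0; rewrite /esum -ereal_supZl //; last first.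
  by apply/set0P; exists 0%E; exists set0; [exact: fsets_set0 | rewrite fsbig_set0].
rewrite image_comp; congr ereal_sup; apply: eq_imagel => A _ /=; by rewrite ge0_mule_fsumr.
Qed.

Lemma geom_esum (R : realType) (z : R) : 0 <= z -> z < 1 ->
  (\esum_(c in [set: nat]) (z ^+ c)%:E = ((1 - z)^-1)%:E)%E.
Proof.
move=> z0 z1; rewrite -nneseries_esumT; last by move=> n; rewrite lee_fin exprn_ge0.
apply: cvg_lim => //.
apply: cvg_EFin; first by apply: nearW => n; rewrite sumEFin.
have H := @cvg_geometric_series R 1 z; rewrite mul1r in H.
rewrite (_ : (fine \o _) = series (geometric 1 z)); last first.
  apply/funext => n /=; rewrite sumEFin /= /series /=; apply: eq_bigr => i _; by rewrite mul1r.
apply: H; rewrite ger0_norm //.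
Qed.


Definition Qset (m : nat) := [set p : seq nat | size p = m /\ sorted leq p].
Definition Pset (m : nat) := [set p : seq nat | size p = m /\ sorted [rel i j : nat | (j <= i)%N] p].

Lemma sumn_addmap c p : sumn (map (addn c) p) = (c * size p + sumn p)%N.
Proof. elim: p => [|x p IH] /=; [by rewrite muln0 | rewrite IH mulnS; lia]. Qed.

Lemma Q_bij m : set_bij ([set: nat] `*`` (fun=> Qset m)) (Qset m.+1)
  (fun cp => cp.1 :: map (addn cp.1) cp.2).
Proof.
split.
- move=> [c p] [_ [/= Hs Hp]]; split; first by rewrite /= size_map Hs.
  rewrite /= (path_sortedE leq_trans) all_map; apply/andP; split.
    by apply/allP => x _ /=; rewrite leq_addr.
  rewrite sorted_map; move: Hp; apply: sub_sorted => x y /=; by rewrite leq_add2l.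
- move=> [c1 p1] [c2 p2] _ _ /= [E1 E2]; subst c2; congr (_, _).
  exact: (inj_map (@addnI c1) E2).
- move=> [|c t] [//= Hs Hp].
  move: Hp; rewrite /= (path_sortedE leq_trans) => /andP [Ha Ht].
  exists (c, map (subn^~ c) t).
    split => //; split; first by rewrite size_map; case: Hs.
    rewrite sorted_map; move: Ht; apply: sub_sorted => x y /=; lia.
  rewrite /=; congr (_ :: _); rewrite -map_comp -[RHS]map_id; apply/eq_in_map => x /(allP Ha) /=.
  lia.
Qed.

Lemma Q_gf (R : realType) (q : R) m : 0 <= q -> q < 1 ->
  (\esum_(p in Qset m) (q ^+ sumn p)%:E = ((qpoch q q m)^-1)%:E)%E.
Proof.
move=> q0 q1; elim: m => [|m IH].
  rewrite (_ : Qset 0 = [set [::]]); last first.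
    by apply/seteqP; split => [p [/size0nil -> _] | p ->] //.
  by rewrite esum_set1 ?lee_fin ?exprn_ge0 //= /qpoch big_ord0 invr1.
rewrite (reindex_esum _ _ _ _ (Q_bij m)).
transitivity (\esum_(c in [set: nat]) \esum_(p in Qset m)
   (q ^+ sumn (c :: map (addn c) p))%:E)%E.
  by rewrite esum_esum // => i j _ _; rewrite lee_fin exprn_ge0.
transitivity (\esum_(c in [set: nat]) (((q ^+ m.+1) ^+ c)%:E *
    \esum_(p in Qset m) (q ^+ sumn p)%:E))%E.
  apply: eq_esum => c _; rewrite -esumZl ?exprn_ge0 //; last by move=> i; rewrite lee_fin exprn_ge0.
  apply: eq_esum => p [Hs _]; rewrite -EFinM /= sumn_addmap Hs -!exprM -exprD; congr (_ ^+ _)%:E; lia.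
rewrite IH (eq_esum (fun c _ => muleC _ _)) esumZl; last 2 first.
- by rewrite invr_ge0 /qpoch; apply: prodr_ge0 => i _; rewrite subr_ge0 -exprS; rewrite exprn_ile1 // ltW.
- by move=> i; rewrite lee_fin !exprn_ge0.
rewrite geom_esum ?exprn_ge0 //; last by rewrite exprn_ilt1.
by rewrite -EFinM /qpoch big_ord_recr /= invfM exprS.
Qed.

Lemma P_gf (R : realType) (q : R) m : 0 <= q -> q < 1 ->
  (\esum_(p in Pset m) (q ^+ sumn p)%:E = ((qpoch q q m)^-1)%:E)%E.
Proof.
move=> q0 q1; rewrite -(Q_gf m q0 q1) (reindex_esum (Qset m) (Pset m) (@rev nat)).
  by apply: eq_esum => p _; rewrite sumn_rev.
split.
- by move=> p [Hs Hp]; split; [rewrite size_rev | rewrite rev_sorted].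
- by move=> p1 p2 _ _ E; rewrite -(revK p1) E revK.
- move=> p [Hs Hp]; exists (rev p); last by rewrite revK.
  by split; [rewrite size_rev | rewrite rev_sorted].
Qed.


Lemma decomp_uniq r b1 p1 b2 p2 : (r == 1)%N || (r == 2)%N -> gok r b1 -> gok r b2 ->
  size p1 = size b1 -> size p2 = size b2 -> size b1 = size b2 ->
  opshift b1 p1 = opshift b2 p2 -> b1 = b2 /\ p1 = p2.
Proof.
move=> Hr G1 G2 S1 S2 S E.
have Eb : b1 = b2.
  apply: gok_unique Hr G1 G2 S _.
  by rewrite -(opshift_snd (esym S1)) E opshift_snd.
subst b2; split => //; exact: opshift_inj S1 S2 E.
Qed.

Lemma Cm_bij r m : (r == 1)%N || (r == 2)%N -> (1 <= m)%N ->
  set_bij ([set b | G_r r m b] `*`` (fun=> Pset m))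
    [set x | C_class r x /\ size x = m] (fun bp => opshift bp.1 bp.2).
Proof.
move=> Hr Hm; split.
- move=> [b p] [/= Hb [Hs Hp]]; move: Hb; rewrite G_rE => /andP [/eqP Sb Gb].
  split; first by apply: compose_ok => //; rewrite Hs Sb.
  by rewrite opshift_size Sb Hs minnn.
- move=> [b1 p1] [b2 p2] /set_mem [/= H1 [S1 _]] /set_mem [/= H2 [S2 _]] /= E.
  move: H1 H2; rewrite !G_rE => /andP [/eqP T1 G1] /andP [/eqP T2 G2].
  have [-> ->] := decomp_uniq Hr G1 G2 (etrans S1 (esym T1)) (etrans S2 (esym T2)) (etrans T1 (esym T2)) E.
  by [].
- move=> x [Cx Sx].
  have [|b [p [Gb Sb Sp Hp Ex]]] := decomp_ex Hr Cx; first by rewrite -size_eq0 Sx; lia.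
  exists (b, p) => //; split; first by rewrite /= G_rE Sb Sx eqxx.
  by split; rewrite ?Sp ?Sx.
Qed.

Lemma Cm_gf (R : realType) r (q : R) m : (r == 1)%N || (r == 2)%N -> 0 <= q -> q < 1 -> (1 <= m)%N ->
  (\esum_(x in [set x | C_class r x /\ size x = m]) (q ^+ weight x)%:E =
   ((qpoch q q m)^-1)%:E * \esum_(b in [set b | G_r r m b]) (q ^+ weight b)%:E)%E.
Proof.
move=> Hr q0 q1 Hm.
rewrite (reindex_esum _ _ _ _ (Cm_bij Hr Hm)).
transitivity (\esum_(b in [set b | G_r r m b]) \esum_(p in Pset m)
   (q ^+ weight (opshift b p))%:E)%E.
  by rewrite esum_esum // => i j _ _; rewrite lee_fin exprn_ge0.
transitivity (\esum_(b in [set b | G_r r m b]) ((q ^+ weight b)%:E *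
    \esum_(p in Pset m) (q ^+ sumn p)%:E))%E.
  apply: eq_esum => b Hb; rewrite -esumZl ?exprn_ge0 //; last by move=> i; rewrite lee_fin exprn_ge0.
  move: Hb; rewrite /= G_rE => /andP [/eqP Sb _].
  apply: eq_esum => p [Hs _]; rewrite -EFinM opshift_weight ?Sb ?Hs // exprD.
  by [].
rewrite P_gf // (eq_esum (fun c _ => muleC _ _)) esumZl //.
- by rewrite invr_ge0 /qpoch; apply: prodr_ge0 => i _; rewrite subr_ge0 -exprS exprn_ile1 // ltW.
- by move=> i; rewrite lee_fin !exprn_ge0.
Qed.

End Anal.

Unset Implicit Arguments. Set Strict Implicit.
Local Open Scope classical_set_scope.
Local Open Scope ring_scope.

Theorem mainTheorem11 (R : realType) (r : nat) :
  (r == 1)%N || (r == 2)%N ->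
  (* each G_r(m) is finite *)
  (forall m : nat, (1 <= m)%N ->
     exists l : seq overpartition, forall b, G_r r m b <-> b \in l) /\
  (* unique decomposition of every element of C_r with m parts *)
  (forall (m : nat) (x : overpartition), (1 <= m)%N ->
     C_class r x -> size x = m ->
     exists! bp : overpartition * seq nat,
       [/\ G_r r m (fst bp), size (snd bp) = m, sorted [rel i j : nat | (j <= i)%N] (snd bp) & x = opshift (fst bp) (snd bp)]) /\
  (* every such expression lies in C_r *)
  (forall (m : nat) (b : overpartition) (p : seq nat), (1 <= m)%N ->
     G_r r m b -> size p = m -> sorted [rel i j : nat | (j <= i)%N] p -> C_class r (opshift b p)) /\
  (* generating function identity, for every real q with 0 <= q < 1 *)
  (forall q : R, 0 <= q < 1 ->
     (\esum_(x in [set x : overpartition | C_class r x]) (q ^+ weight x)%:E =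
      1 + \sum_(1 <= m <oo)
            ((qpoch q q m)^-1%:E *
             \esum_(x in [set x : overpartition | G_r r m x]) (q ^+ weight x)%:E))%E).

Proof.
move=> Hr; split; first by move=> m _; apply: G_finite.
split.
  move=> m x Hm Cx Sx.
  have [|b [p [Gb Sb Sp Hp Ex]]] := decomp_ex Hr Cx; first by rewrite -size_eq0 Sx -lt0n.
  exists (b, p); split.
    by split => //=; [rewrite G_rE Sb Sx eqxx | rewrite Sp].
  move=> [b' p'] [/= Gb' Sp' Hp' Ex'].
  move: Gb'; rewrite G_rE => /andP [/eqP Sb' Gb'].
  have [-> ->] := decomp_uniq Hr Gb Gb' (etrans Sp (esym Sb)) (etrans Sp' (esym Sb'))
     (etrans Sb (etrans Sx (esym Sb'))) (etrans (esym Ex) Ex').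
  by [].
split.
  move=> m b p Hm; rewrite G_rE => /andP [/eqP Sb Gb] Sp Hp.
  by apply: compose_ok => //; rewrite Sp Sb.
move=> q /andP [q0 q1].
have -> : [set x : overpartition | C_class r x] =
    \bigcup_(m in [set: nat]) [set x | C_class r x /\ size x = m].
  apply/seteqP; split => [x Cx | x [m _ [Cx _]]] //; by exists (size x).
rewrite esum_bigcupT; last 2 first.
- by move=> i j _ _ [x [[_ Hi] [_ Hj]]]; rewrite -Hi -Hj.
- by move=> x; rewrite lee_fin exprn_ge0.
rewrite -nneseries_esumT; last by move=> n; apply: esum_ge0 => x _; rewrite lee_fin exprn_ge0.
have H0 := @nneseries_recl R xpredT (fun m => \esum_(x in [set x | C_class r x /\ size x = m]) (q ^+ weight x)%:E)%E.
rewrite H0 //; last by move=> n _; apply: esum_ge0 => x _; rewrite lee_fin exprn_ge0.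
congr (_ + _)%E.
  rewrite (_ : [set x | C_class r x /\ size x = 0%N] = [set [::]]); last first.
    apply/seteqP; split => [x [_ /size0nil ->] | x ->] //=.
  by rewrite esum_set1 // lee_fin expr0.
congr (limn _); apply/funext => n; apply: eq_big_nat => i /andP [Hi _].
exact: Cm_gf.
Qed.
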